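(* Let $p\ge1$, $0<\mu<\ell$, and real numbers $q_0,\dots,q_{p-1},r_0,\dots,r_{p-1}$. For $\nu\in[\mu,\ell]$ let $C_j(\nu):=q_j+r_j\nu$ and let $\mathbf C(\nu)\in\mathbb R^{p\times p}$ be the companion matrix with ones on the superdiagonal, last row $(C_0(\nu),C_1(\nu),\dots,C_{p-1}(\nu))$, and zeros elsewhere. Suppose there is no $\nu\in[\mu,\ell]$ with $C_0(\nu)=\dots=C_{p-1}(\nu)=0$. Then $$\sup_{\nu\in[\mu,\ell]}\rho(\mathbf C(\nu))=\sup_{\nu\in[\mu,\ell]}\liminf_{t\to\infty}\|\mathbf C(\nu)^t\|_\sigma^{1/t}\ge\liminf_{t\to\infty}\sup_{\nu\in[\mu,\ell]}\|\mathbf C(\nu)^t\|_\sigma^{1/t}.$$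
   Context: $\rho(\mathbf C)$ denotes the spectral radius (maximum modulus of an eigenvalue) and $\|\cdot\|_\sigma$ the spectral norm. *)

(* Defs.v *)
From HB Require Import structures.
From mathcomp Require Import all_boot all_order all_algebra.
From mathcomp Require Import complex.
From mathcomp Require Import all_classical all_reals all_analysis.
Set Implicit Arguments. Unset Strict Implicit. Unset Printing Implicit Defensive.
Import Order.TTheory GRing.Theory Num.Theory.
Local Open Scope ring_scope.
Local Open Scope classical_set_scope.

Definition spectral_radius (R : realType) (n : nat) (A : 'M[R]_n) : R :=
  sup [set Normc.normc z | z in
        [set z : R[i] | eigenvalue (map_mx (fun x : R => (x%:C)%C) A) z]].

Definition euclid_norm (R : realType) (n : nat) (x : 'cV[R]_n) : R :=
  Num.sqrt (\sum_(i < n) x i 0 ^+ 2).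

(* Spectral norm = operator norm induced by the Euclidean norm
   (= largest singular value). *)
Definition spectral_norm (R : realType) (n : nat) (A : 'M[R]_n) : R :=
  sup [set euclid_norm (A *m x) | x in [set x : 'cV[R]_n | euclid_norm x = 1]].

Definition companion (R : realType) (p : nat) (q r : 'I_p -> R) (nu : R)
  : 'M[R]_p :=
  \matrix_(i, j) (if (i : nat).+1 == j then 1
                  else if (i : nat) == p.-1 then q j + r j * nu else 0).

(* Main.v *)
Require Import Defs.
From HB Require Import structures.
From mathcomp Require Import all_boot all_order all_algebra.
From mathcomp Require Import complex.
From mathcomp Require Import all_classical all_reals all_analysis.
Import Order.TTheory GRing.Theory Num.Theory.
From mathcomp Require Import ring lra.
Local Open Scope ring_scope.
Local Open Scope classical_set_scope.

Section E.
Variable R : realType.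
Local Open Scope ereal_scope.

Lemma einf_ge (u : (\bar R)^nat) (b : \bar R) N :
  (forall n, (N <= n)%N -> b <= u n) -> b <= limn_einf u.
Proof.
move=> H; rewrite limn_einf_lim; have /cvg_lim -> := @cvg_einfs_sup _ u => //.
apply: (@le_trans _ _ (einfs u N)); last by apply: ereal_sup_ubound; exists N.
by apply: le_ereal_inf_tmp => _ [k /= Nk <-]; apply: H.
Qed.

Lemma einf_le (u : (\bar R)^nat) (b : \bar R) N :
  (forall n, (N <= n)%N -> u n <= b) -> limn_einf u <= b.
Proof.
move=> H; rewrite limn_einf_lim; have /cvg_lim -> := @cvg_einfs_sup _ u => //.
apply: ub_ereal_sup => _ [m _ <-].
apply: (@le_trans _ _ (u (maxn m N))); last by apply: H; rewrite leq_maxr.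
by apply: ereal_inf_lbound; exists (maxn m N) => //=; rewrite leq_maxl.
Qed.
End E.

Section Norms.
Variable R : realType.
Variable n : nat.
Implicit Types (x : 'cV[R]_n) (A : 'M[R]_n).

Lemma euclid_ge0 x : 0 <= euclid_norm x.
Proof. exact: sqrtr_ge0. Qed.

Lemma sumsq_ge0 x : 0 <= \sum_(i < n) x i 0 ^+ 2.
Proof. by apply: sumr_ge0 => i _; exact: sqr_ge0. Qed.

Lemma coord_le x i : `|x i 0| <= euclid_norm x.
Proof.
rewrite /euclid_norm -sqrtr_sqr; apply: ler_wsqrtr.
by rewrite (bigD1 i) //= lerDl; apply: sumr_ge0 => j _; exact: sqr_ge0.
Qed.

Lemma euclid_le_sum x : euclid_norm x <= \sum_i `|x i 0|.
Proof.
have H : 0 <= \sum_i `|x i 0| /\ \sum_(i < n) x i 0 ^+ 2 <= (\sum_i `|x i 0|) ^+ 2.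
  apply: (big_rec2 (fun a b => 0 <= b /\ a <= b ^+ 2)); first by rewrite expr0n /=.
  move=> i a b _ [b0 ab]; have := normr_ge0 (x i 0); rewrite -[x i 0 ^+ 2]real_normK ?num_real //.
  move=> h; split; first by rewrite addr_ge0.
  set c := `|x i 0| in h *; nra.
case: H => h0 h1; rewrite /euclid_norm -(ger0_norm h0) -sqrtr_sqr.
exact: ler_wsqrtr.
Qed.

Lemma euclid_scale (c : R) x : euclid_norm (c *: x) = `|c| * euclid_norm x.
Proof.
rewrite /euclid_norm -sqrtr_sqr -sqrtrM ?sqr_ge0 //; congr Num.sqrt.
rewrite mulr_sumr; apply: eq_bigr => i _; rewrite mxE exprMn //.
Qed.

Lemma euclid_eq0 x : euclid_norm x = 0 -> x = 0.
Proof.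
move=> h; apply/matrixP => i j; rewrite ord1 mxE; apply/eqP.
by rewrite -normr_eq0 eq_le normr_ge0 andbT -h coord_le.
Qed.

Lemma euclid0 : euclid_norm (0 : 'cV[R]_n) = 0.
Proof. by rewrite /euclid_norm big1 ?sqrtr0 // => i _; rewrite mxE expr0n. Qed.

Definition mxsum A := \sum_i \sum_j `|A i j|.

Lemma unit_bound A x : euclid_norm x = 1 -> euclid_norm (A *m x) <= mxsum A.
Proof.
move=> x1; apply: (le_trans (euclid_le_sum _)); apply: ler_sum => i _.
rewrite mxE; apply: (le_trans (ler_norm_sum _ _ _)); apply: ler_sum => j _.
rewrite normrM -[X in _ <= X]mulr1 ler_wpM2l //; rewrite -x1; exact: coord_le.
Qed.

Lemma spec_has_ub A : has_ubound [set euclid_norm (A *m x) | x in [set x : 'cV[R]_n | euclid_norm x = 1]].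
Proof. by exists (mxsum A) => _ [x x1 <-]; exact: unit_bound. Qed.

Lemma spec_le_ub A : (0 < n)%N -> spectral_norm A <= mxsum A.
Proof.
move=> n0; apply: ge_sup; last by move=> _ [x x1 <-]; exact: unit_bound.
pose e : 'cV[R]_n := \col_i (if (i : nat) == 0%N then 1 else 0).
exists (euclid_norm (A *m e)), e => //.
rewrite /= /euclid_norm (bigD1 (Ordinal n0)) //= big1 ?mxE /= ?eqxx ?expr1n ?addr0 ?sqrtr1 //.
move=> i /negPf ne; rewrite mxE; case: ifP => h; last by rewrite expr0n.
have e0 : i = Ordinal n0 by apply: val_inj; apply/eqP.
by rewrite e0 eqxx in ne.
Qed.

Lemma spec_ub A x : euclid_norm x = 1 -> euclid_norm (A *m x) <= spectral_norm A.
Proof. by move=> x1; apply: (ub_le_sup (spec_has_ub A)); exists x. Qed.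

Lemma spec_bound A x : euclid_norm (A *m x) <= spectral_norm A * euclid_norm x.
Proof.
have [->|nx0] := eqVneq x 0; first by rewrite mulmx0 euclid0 mulr0.
have c0 : 0 < euclid_norm x.
  rewrite lt_def euclid_ge0 andbT; apply/eqP => h; move/eqP: nx0; apply; exact: euclid_eq0.
have i0 : 0 <= (euclid_norm x)^-1 by rewrite invr_ge0 ltW.
have y1 : euclid_norm ((euclid_norm x)^-1 *: x) = 1.
  by rewrite euclid_scale ger0_norm // mulVf // gt_eqF.
have := spec_ub A _ y1; rewrite -scalemxAr euclid_scale ger0_norm //.
by rewrite mulrC -ler_pdivrMr // mulrC.
Qed.

Lemma spec_ge0 A : 0 <= spectral_norm A.
Proof.
rewrite /spectral_norm.
case: (pselect (exists x : 'cV[R]_n, euclid_norm x = 1)) => [[x x1]|nx].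
  exact: le_trans (euclid_ge0 _) (spec_ub A _ x1).
have -> : [set euclid_norm (A *m x) | x in [set x : 'cV[R]_n | euclid_norm x = 1]] = set0.
  by apply/seteqP; split => // y [x x1 _]; apply: nx; exists x.
by rewrite sup0.
Qed.
End Norms.

Section Lower.
Variable R : realType.
Local Notation C := (R[i]).
Local Notation cx := (fun x : R => (x%:C)%C).

Lemma char_poly_tr (F : comNzRingType) n (A : 'M[F]_n) : char_poly A^T = char_poly A.
Proof.
rewrite /char_poly -det_tr; congr (\det _).
by rewrite /char_poly_mx linearB /= tr_scalar_mx map_trmx trmxK.
Qed.

Lemma map_mx_exp n (A : 'M[R]_n) t : map_mx cx (A ^+ t) = (map_mx cx A) ^+ t.
Proof.
elim: t => [|t IH]; first by rewrite !expr0; apply/matrixP => i j; rewrite !mxE; case: (i == j).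
by rewrite !exprS -!mulmxE map_mxM IH.
Qed.

Lemma ReD (x y : C) : complex.Re (x + y) = complex.Re x + complex.Re y.
Proof. by case: x; case: y. Qed.
Lemma ImD (x y : C) : complex.Im (x + y) = complex.Im x + complex.Im y.
Proof. by case: x; case: y. Qed.
Lemma ReM (r : R) (z : C) : complex.Re (r%:C * z)%C = r * complex.Re z.
Proof. by case: z => a b /=; rewrite mul0r subr0. Qed.
Lemma ImM (r : R) (z : C) : complex.Im (r%:C * z)%C = r * complex.Im z.
Proof. by case: z => a b /=; rewrite mul0r addr0. Qed.

Lemma normc_sq (z : C) : Normc.normc z ^+ 2 = complex.Re z ^+ 2 + complex.Im z ^+ 2.
Proof. by case: z => a b /=; rewrite sqr_sqrtr // addr_ge0 // sqr_ge0. Qed.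

Lemma normc_ge0 (z : C) : 0 <= Normc.normc z.
Proof. by case: z => a b /=; exact: sqrtr_ge0. Qed.

Lemma normc_exp (z : C) k : Normc.normc (z ^+ k) = Normc.normc z ^+ k.
Proof.
elim: k => [|k IH]; first by rewrite !expr0 Normc.normc1.
by rewrite !exprS Normc.normcM IH.
Qed.

Lemma euclid_sq n (x : 'cV[R]_n) : euclid_norm x ^+ 2 = \sum_i x i 0 ^+ 2.
Proof. by rewrite sqr_sqrtr // sumsq_ge0. Qed.

Lemma lower_bound n (A : 'M[R]_n) (lam : C) t :
  eigenvalue (map_mx cx A) lam -> Normc.normc lam ^+ t <= spectral_norm (A ^+ t).
Proof.
set A' := map_mx cx A.
rewrite eigenvalue_root_char -char_poly_tr -eigenvalue_root_char.
case/eigenvalueP => v vA vn0.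
set w := v^T.
have Aw : A' *m w = lam *: w by rewrite /w -[A']trmxK -trmx_mul vA linearZ.
have Atw : map_mx cx (A ^+ t) *m w = lam ^+ t *: w.
  rewrite map_mx_exp; elim: t => [|t IH]; first by rewrite !expr0 mul1mx scale1r.
  by rewrite exprSr -mulmxE -mulmxA Aw -scalemxAr IH scalerA -exprS.
set B := A ^+ t.
set a : 'cV[R]_n := map_mx (@complex.Re R) w.
set b : 'cV[R]_n := map_mx (@complex.Im R) w.
have ReBw i : complex.Re ((map_mx cx B *m w) i 0) = (B *m a) i 0.
  rewrite !mxE; rewrite (big_morph _ ReD (erefl (complex.Re 0))).
  by apply: eq_bigr => j _; rewrite !mxE ReM.
have ImBw i : complex.Im ((map_mx cx B *m w) i 0) = (B *m b) i 0.
  rewrite !mxE; rewrite (big_morph _ ImD (erefl (complex.Im 0))).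
  by apply: eq_bigr => j _; rewrite !mxE ImM.
set W := \sum_i Normc.normc (w i 0) ^+ 2.
have W0 : 0 < W.
  have [i wi] : exists i, w i 0 != 0.
    case: (pselect (exists i, w i 0 != 0)) => // nx; exfalso; move/eqP: vn0; apply.
    apply/matrixP => j k; rewrite ord1 mxE.
    have -> : v 0 k = w k 0 by rewrite /w mxE.
    by apply/eqP; apply/negPn/negP => h; apply: nx; exists k.
  rewrite /W (bigD1 i) //=; apply: (@lt_le_trans _ _ (Normc.normc (w i 0) ^+ 2)).
    rewrite exprn_gt0 // lt_def normc_ge0 andbT; apply/eqP => /Normc.eq0_normc h.
    by rewrite h eqxx in wi.
  by rewrite lerDl; apply: sumr_ge0 => j _; exact: sqr_ge0.
have E1 : \sum_i Normc.normc ((map_mx cx B *m w) i 0) ^+ 2 = Normc.normc lam ^+ t ^+ 2 * W.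
  rewrite /W mulr_sumr; apply: eq_bigr => i _.
  by rewrite Atw mxE Normc.normcM -exprMn normc_exp.
set N := spectral_norm B.
have N0 : 0 <= N by exact: spec_ge0.
have E2 : \sum_i Normc.normc ((map_mx cx B *m w) i 0) ^+ 2
          = euclid_norm (B *m a) ^+ 2 + euclid_norm (B *m b) ^+ 2.
  rewrite !euclid_sq -big_split /=; apply: eq_bigr => i _.
  by rewrite normc_sq ReBw ImBw.
have E3 : W = euclid_norm a ^+ 2 + euclid_norm b ^+ 2.
  rewrite !euclid_sq -big_split /=; apply: eq_bigr => i _.
  by rewrite normc_sq !mxE.
have Ha := @spec_bound _ _ B a; have Hb := @spec_bound _ _ B b.
have a0 := @euclid_ge0 _ _ (B *m a); have b0 := @euclid_ge0 _ _ (B *m b).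
have a1 := @euclid_ge0 _ _ a; have b1 := @euclid_ge0 _ _ b.
have F : Normc.normc lam ^+ t ^+ 2 * W <= N ^+ 2 * W.
  rewrite -E1 E2 E3; set x1 := euclid_norm (B *m a) in Ha a0 *; set x2 := euclid_norm (B *m b) in Hb b0 *.
  set y1 := euclid_norm a in Ha a1 *; set y2 := euclid_norm b in Hb b1 *.
  rewrite -/N in Ha Hb; nra.
rewrite ler_pM2r // in F.
have L0 : 0 <= Normc.normc lam ^+ t by rewrite exprn_ge0 // normc_ge0.
set L := Normc.normc lam ^+ t in F L0 *; nra.
Qed.
End Lower.

Section Upper.
Variable R : realType.
Local Notation C := (R[i]).
Local Notation nc := (@Normc.normc R).

Lemma normc_add (x y : C) : nc (x + y) <= nc x + nc y.
Proof. exact: le_normcD. Qed.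

Lemma normc_real (x : R) : nc (x%:C)%C = `|x|.
Proof. by rewrite /= expr0n /= addr0 sqrtr_sqr. Qed.

Lemma step_bound (x w : nat -> C) (z : C) (r e K K' : R) :
  0 <= r -> 0 < e -> nc z <= r ->
  (forall k, x k.+1 = z * x k + w k) ->
  (forall k, nc (w k) <= K * (r + e) ^+ k) ->
  nc (x 0%N) <= K' -> K <= K' * e ->
  forall k, nc (x k) <= K' * (r + e) ^+ k.
Proof.
move=> r0 e0 zr rec wb x0 KK; elim => [|k IH]; first by rewrite expr0 mulr1.
rewrite rec; apply: (le_trans (normc_add _ _)); rewrite Normc.normcM.
have s0 : 0 <= (r + e) ^+ k by rewrite exprn_ge0 // addr_ge0 // ltW.
have h1 : nc z * nc (x k) <= r * (K' * (r + e) ^+ k).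
  by apply: ler_pM => //; exact: normc_ge0.
have h2 := wb k.
have h3 : K * (r + e) ^+ k <= K' * e * (r + e) ^+ k by apply: ler_wpM2r.
rewrite exprS; set S := (r + e) ^+ k in s0 h1 h2 h3 *.
set X := nc z * nc (x k) in h1 *; set Wk := nc (w k) in h2 *.
nra.
Qed.

Variable n' : nat.
Local Notation n := n'.+1.
Variable A : 'M[C]_n.

Definition Pl (s : seq C) : {poly C} := \prod_(z <- s) ('X - z%:P).
Definition Y (s : seq C) k := A ^+ k *m horner_mx A (Pl s).

Lemma Y_cons z s k : Y (z :: s) k = Y s k.+1 - z *: Y s k.
Proof.
rewrite /Y /Pl big_cons rmorphM rmorphB /= horner_mx_X horner_mx_C.
rewrite mulrBl mulmxBr exprSr; congr (_ - _).
  by rewrite -!mulmxE mulmxA.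
by rewrite -mulmxE mul_scalar_mx scalemxAr.
Qed.

Lemma Y_nil k : Y [::] k = A ^+ k.
Proof. by rewrite /Y /Pl big_nil rmorph1 mulmx1. Qed.

Lemma chain (rs : seq C) (r e Bp : R) :
  0 <= r -> 0 < e -> 0 <= Bp ->
  (forall z, z \in rs -> nc z <= r) ->
  (forall m i j, nc (horner_mx A (Pl (drop m rs)) i j) <= Bp) ->
  (forall k, Y rs k = 0) ->
  forall k i j, nc ((A ^+ k) i j) <= Bp * (1 + e^-1) ^+ size rs * (r + e) ^+ k.
Proof.
move=> r0 e0 B0 zr HB Y0.
suff H : forall m, (m <= size rs)%N -> forall k i j,
    nc ((Y (drop m rs) k) i j) <= Bp * (1 + e^-1) ^+ m * (r + e) ^+ k.
  by move=> k i j; have := H _ (leqnn _) k i j; rewrite drop_size Y_nil.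
elim => [_|m IH lt] k i j.
  by rewrite drop0 Y0 mxE Normc.normc0 expr0 mulr1 mulr_ge0 // exprn_ge0 // addr_ge0 // ltW.
have ltm : (m < size rs)%N by [].
have dm : drop m rs = nth 0 rs m :: drop m.+1 rs by rewrite (drop_nth 0).
apply: (@step_bound (fun k => Y (drop m.+1 rs) k i j) (fun k => Y (drop m rs) k i j)
           (nth 0 rs m) r e (Bp * (1 + e^-1) ^+ m)) => //.
- by apply: zr; rewrite mem_nth.
- by move=> k'; rewrite dm Y_cons !mxE addrCA subrr addr0.
- by move=> k'; apply: IH; exact: ltnW.
- rewrite /Y expr0 mul1mx; apply: (le_trans (HB _ i j)).
  rewrite -[X in X <= _]mulr1 ler_wpM2l // exprn_ege1 // lerDl invr_ge0 ltW //.
- have h : (1 + e^-1) * e = e + 1 by rewrite mulrDl mul1r mulVf ?gt_eqF.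
  have c0 : 0 <= (1 + e^-1) ^+ m by rewrite exprn_ge0 // addr_ge0 // invr_ge0 ltW.
  rewrite exprS; set u := 1 + e^-1 in h c0 *; set c := u ^+ m in c0 *.
  have -> : Bp * (u * c) * e = (Bp * c) * (u * e) by ring.
  rewrite h -[X in X <= _]mulr1 ler_wpM2l ?mulr_ge0 //; lra.
Qed.

Lemma normc_sum (F : 'I_n -> C) : nc (\sum_k F k) <= \sum_k nc (F k).
Proof.
apply: (big_rec2 (fun a b => nc a <= b)); first by rewrite Normc.normc0.
by move=> k a b _ h; apply: (le_trans (normc_add _ _)); rewrite lerD2l.
Qed.

Lemma horner_bound (a r : R) : 0 <= a -> 0 <= r -> (forall i j, nc (A i j) <= a) ->
  forall s, (forall z, z \in s -> nc z <= r) ->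
  forall i j, nc (horner_mx A (Pl s) i j) <= (n%:R * (a + r)) ^+ size s.
Proof.
move=> a0 r0 Ha; elim => [|z s IH] zs i j.
  rewrite /Pl big_nil rmorph1 expr0 mxE.
  by case: (i == j); rewrite ?Normc.normc1 ?Normc.normc0.
rewrite /Pl big_cons rmorphM rmorphB /= horner_mx_X horner_mx_C -/(Pl s).
rewrite -mulmxE mxE; apply: (le_trans (normc_sum _)).
have IH' : forall k, nc (horner_mx A (Pl s) k j) <= (n%:R * (a + r)) ^+ size s.
  by move=> k; apply: IH => // y ys; apply: zs; rewrite in_cons ys orbT.
have Bs0 : 0 <= (n%:R * (a + r)) ^+ size s by rewrite exprn_ge0 // mulr_ge0 // addr_ge0.
have H1 : forall k, nc ((A - z%:M) i k) <= a + r.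
  move=> k; rewrite !mxE; apply: (le_trans (normc_add _ _)); rewrite normcN.
  apply: lerD => //; case: (i == k).
    by rewrite mulr1n; apply: zs; rewrite in_cons eqxx.
  by rewrite mulr0n (Normc.normc0 R).
apply: (@le_trans _ _ (\sum_(k < n) ((a + r) * (n%:R * (a + r)) ^+ size s))).
  apply: ler_sum => k _; rewrite Normc.normcM; apply: ler_pM => //; exact: normc_ge0.
by rewrite sumr_const card_ord /= exprS; rewrite le_eqVlt; apply/orP; left; apply/eqP; ring.
Qed.

Lemma upper_cx (a r e : R) : 1 <= a -> 0 <= r -> 0 < e ->
  (forall i j, nc (A i j) <= a) ->
  (forall lam, eigenvalue A lam -> nc lam <= r) ->
  forall k i j, nc ((A ^+ k) i j) <=
    (n%:R * (a + r)) ^+ n * (1 + e^-1) ^+ n * (r + e) ^+ k.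
Proof.
move=> a1 r0 e0 Ha Hr.
have [rs Hrs] := closed_field_poly_normal (char_poly A).
rewrite (monicP (char_poly_monic A)) scale1r in Hrs.
have szrs : size rs = n.
  by have := size_char_poly A; rewrite Hrs size_prod_XsubC => -[].
rewrite -[X in (1 + e^-1) ^+ X]szrs.
have B1 : 1 <= n%:R * (a + r).
  have h1 : 1 <= n%:R :> R by rewrite ler1n.
  have h2 : 1 <= a + r by lra.
  set x := n%:R in h1 *; nra.
apply: chain => //.
- by rewrite exprn_ge0 // (le_trans ler01 B1).
- move=> z zin; apply: Hr; rewrite eigenvalue_root_char Hrs root_prod_XsubC //.
- move=> m i j.
  have zs : forall z, z \in drop m rs -> nc z <= r.
    by move=> z zin; apply: Hr; rewrite eigenvalue_root_char Hrs root_prod_XsubC (mem_drop zin).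
  have /le_trans := @horner_bound a r (le_trans ler01 a1) r0 Ha _ zs i j; apply.
  by apply: ler_weXn2l => //; rewrite size_drop szrs leq_subr.
- by move=> k; rewrite /Y /Pl -Hrs Cayley_Hamilton mulmx0.
Qed.
End Upper.

Section H.
Variable R : realType.

Lemma powR_root (x : R) t : 0 <= x -> (0 < t)%N -> (x ^+ t) `^ (t%:R)^-1 = x.
Proof.
move=> x0 t0; rewrite -powR_mulrn // -powRrM mulfV ?powRr1 //.
by rewrite pnatr_eq0 -lt0n.
Qed.

Lemma powR_mono (x y c : R) : 0 <= c -> 0 <= x -> x <= y -> x `^ c <= y `^ c.
Proof.
move=> c0 x0 xy; apply: (ge0_ler_powR c0) => //; rewrite nnegrE //.
exact: le_trans xy.
Qed.

Lemma bern (d : R) k : 0 <= d -> 1 + k%:R * d <= (1 + d) ^+ k.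
Proof.
move=> d0; elim: k => [|k IH]; first by rewrite mul0r addr0 expr0.
rewrite exprS; have h : 1 <= (1 + d) ^+ k by rewrite exprn_ege1 // lerDl.
rewrite -natr1; set X := (1 + d) ^+ k in IH h *; set K := k%:R in IH *.
have K0 : 0 <= K by rewrite /K ler0n.
nra.
Qed.

Lemma mem_I (mu l nu : R) : `[mu, l]%classic nu -> mu <= nu <= l.
Proof. by rewrite /= in_itv. Qed.
End H.
Arguments mem_I {R mu l nu}.

Goal forall (R : realType) (mu l nu : R) (f : R -> R), [set f x | x in `[mu, l]] (f nu) -> True.
move=> R mu l nu f [x hx _]. have := mem_I hx. done.
Qed.
Section Rad.
Variable R : realType.
Variable n : nat.
Local Notation cx := (fun x : R => (x%:C)%C).

Lemma eig_le_rad (A : 'M[R]_n) lam : eigenvalue (map_mx cx A) lam ->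
  Normc.normc lam <= spectral_radius A.
Proof.
move=> ev; apply: ub_le_sup; last by exists lam.
exists (spectral_norm (A ^+ 1)) => _ [z zi <-].
by have := @lower_bound _ _ A z 1 zi; rewrite expr1.
Qed.

Lemma rad_ge0 (A : 'M[R]_n) : 0 <= spectral_radius A.
Proof.
case: (pselect (exists z, eigenvalue (map_mx cx A) z)) => [[z zi]|nz].
  exact: le_trans (normc_ge0 _ z) (eig_le_rad A z zi).
rewrite /spectral_radius.
have -> : [set Normc.normc z | z in [set z : R[i] | eigenvalue (map_mx cx A) z]] = set0.
  by apply/seteqP; split => // y [z zi _]; apply: nz; exists z.
by rewrite sup0.
Qed.

Lemma rad_le (A : 'M[R]_n) t : (0 < t)%N ->
  spectral_radius A <= spectral_norm (A ^+ t) `^ (t%:R)^-1.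
Proof.
move=> t0.
case: (pselect (exists z, eigenvalue (map_mx cx A) z)) => [[z zi]|nz].
  apply: ge_sup; first by exists (Normc.normc z), z.
  move=> _ [y yi <-]; rewrite -(@powR_root _ _ t (normc_ge0 _ y) t0).
  apply: powR_mono; first by rewrite invr_ge0 ler0n.
    by rewrite exprn_ge0 // normc_ge0.
  exact: lower_bound.
rewrite /spectral_radius.
have -> : [set Normc.normc z | z in [set z : R[i] | eigenvalue (map_mx cx A) z]] = set0.
  by apply/seteqP; split => // y [z zi _]; apply: nz; exists z.
by rewrite sup0 powR_ge0.
Qed.
End Rad.

Section Unif.
Variable R : realType.
Local Notation cx := (fun x : R => (x%:C)%C).

Lemma normc_mx n (M : 'M[R]_n) i j : Normc.normc ((map_mx cx M) i j) = `|M i j|.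
Proof. by rewrite mxE /= expr0n /= addr0 sqrtr_sqr. Qed.

Lemma comp_entry (p' : nat) (mu l : R) (q r : 'I_p'.+1 -> R) nu i j :
  0 < mu -> `[mu, l]%classic nu ->
  `|companion q r nu i j| <= 1 + \sum_k (`|q k| + `|r k| * l).
Proof.
move=> mu0 /mem_I /andP[h1 h2].
have S0 : 0 <= \sum_k (`|q k| + `|r k| * l).
  apply: sumr_ge0 => k _; rewrite addr_ge0 // mulr_ge0 //; lra.
rewrite mxE; case: ifP => _; first by rewrite normr1 lerDl.
case: ifP => _; last by rewrite normr0; lra.
apply: (le_trans (ler_normD _ _)); rewrite normrM.
have : `|q j| + `|r j| * `|nu| <= \sum_k (`|q k| + `|r k| * l).
  rewrite (bigD1 j) //= -addrA lerD2l.
  have : `|r j| * `|nu| <= `|r j| * l by rewrite ler_wpM2l // ger0_norm //; lra.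
  have : 0 <= \sum_(k | k != j) (`|q k| + `|r k| * l).
    by apply: sumr_ge0 => k _; rewrite addr_ge0 // mulr_ge0 //; lra.
  lra.
lra.
Qed.

Lemma uniform (p' : nat) (mu l : R) (q r : 'I_p'.+1 -> R) (s0 e : R) :
  0 < mu -> 0 <= l -> 0 <= s0 -> 0 < e ->
  (forall nu, `[mu, l]%classic nu -> spectral_radius (companion q r nu) <= s0) ->
  exists T, forall t, (T <= t)%N -> forall nu, `[mu, l]%classic nu ->
    spectral_norm (companion q r nu ^+ t) `^ (t%:R)^-1 <= s0 + e + e.
Proof.
move=> mu0 l0 s00 e0 Hrad.
set a := 1 + \sum_k (`|q k| + `|r k| * l).
have a1 : 1 <= a.
  rewrite lerDl; apply: sumr_ge0 => k _; rewrite addr_ge0 // mulr_ge0 //.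
set K := ((p'.+1)%:R * (a + s0)) ^+ p'.+1 * (1 + e^-1) ^+ p'.+1.
set c := (p'.+1)%:R * (p'.+1)%:R * K.
have K0 : 0 <= K.
  have ie : 0 <= e^-1 by rewrite invr_ge0 ltW.
  have as0 : 0 <= a + s0 by lra.
  by rewrite mulr_ge0 // exprn_ge0 // ?mulr_ge0 // addr_ge0.
have c0 : 0 <= c by rewrite mulr_ge0 // mulr_ge0.
set d := e / (s0 + e).
have se0 : 0 < s0 + e by lra.
have d0 : 0 < d by rewrite divr_gt0.
have Hb : forall nu, `[mu, l]%classic nu -> forall t,
    spectral_norm (companion q r nu ^+ t) <= c * (s0 + e) ^+ t.
  move=> nu Inu t; set Cn := companion q r nu.
  have Ha : forall i j, Normc.normc ((map_mx cx Cn) i j) <= a.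
    by move=> i j; rewrite normc_mx; exact: (@comp_entry p' mu l q r nu i j mu0 Inu).
  have Hr : forall lam, eigenvalue (map_mx cx Cn) lam -> Normc.normc lam <= s0.
    by move=> lam ev; apply: le_trans (Hrad nu Inu); exact: eig_le_rad.
  have He : forall i j, `|(Cn ^+ t) i j| <= K * (s0 + e) ^+ t.
    move=> i j; have -> : `|(Cn ^+ t) i j| = Normc.normc ((map_mx cx Cn ^+ t) i j).
      by rewrite -map_mx_exp normc_mx.
    exact: (@upper_cx _ p' (map_mx cx Cn) a s0 e a1 s00 e0 Ha Hr t i j).
  apply: (le_trans (@spec_le_ub _ _ (Cn ^+ t) (ltn0Sn p'))); rewrite /mxsum.
  apply: (@le_trans _ _ (\sum_(i < p'.+1) \sum_(j < p'.+1) (K * (s0 + e) ^+ t))).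
    by apply: ler_sum => i _; apply: ler_sum => j _; exact: He.
  rewrite !sumr_const !card_ord /c; rewrite le_eqVlt; apply/orP; left; apply/eqP; ring.
exists (Num.truncn (c / d)).+1 => t Tt nu Inu.
have t0 : (0 < t)%N by apply: leq_trans Tt.
have it0 : 0 <= (t%:R : R)^-1 by rewrite invr_ge0 ler0n.
apply: (le_trans (@powR_mono _ _ _ _ it0 (spec_ge0 _ _ _) (Hb nu Inu t))).
have se0' : 0 <= s0 + e by exact: ltW.
rewrite powRM // ?exprn_ge0 // powR_root //.
have cd : c <= (1 + d) ^+ t.
  have h1 := truncnS_gt (c / d).
  have h2 : ((Num.truncn (c / d)).+1%:R : R) <= t%:R by rewrite ler_nat.
  have h3 := @bern _ d t (ltW d0).
  have h4 : c / d < t%:R by lra.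
  have h5 : c < t%:R * d by rewrite -ltr_pdivrMr.
  have : 0 <= t%:R * d by rewrite mulr_ge0 // ?ler0n // ltW.
  lra.
have : c `^ (t%:R)^-1 <= 1 + d.
  rewrite -[X in _ <= X](@powR_root _ _ t _ t0); last by rewrite addr_ge0 // ltW.
  exact: powR_mono.
have hd : (1 + d) * (s0 + e) = s0 + e + e.
  by rewrite /d mulrDl mul1r mulrAC -mulrA mulfV ?gt_eqF // mulr1.
move=> h; rewrite -hd ler_wpM2r //.
Qed.
End Unif.

Theorem lemma26 (R : realType) (p : nat) (mu l : R) (q r : 'I_p -> R) :
  (0 < p)%N -> 0 < mu -> mu < l ->
  ~ (exists2 nu, nu \in `[mu, l] & forall j : 'I_p, q j + r j * nu = 0) ->
  let C := companion q r in
  ereal_sup [set (spectral_radius (C nu))%:E | nu in `[mu, l]]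
  = ereal_sup [set limn_einf (fun t : nat =>
        (spectral_norm (C nu ^+ t) `^ (t%:R)^-1)%:E) | nu in `[mu, l]]
  /\
  (limn_einf (fun t : nat =>
      ereal_sup [set (spectral_norm (C nu ^+ t) `^ (t%:R)^-1)%:E
                | nu in `[mu, l]])
   <= ereal_sup [set limn_einf (fun t : nat =>
        (spectral_norm (C nu ^+ t) `^ (t%:R)^-1)%:E) | nu in `[mu, l]])%E.
Proof.
case: p q r => [//|p'] q r _ mu0 mul _ C.
set u := fun nu (t : nat) => (spectral_norm (C nu ^+ t) `^ (t%:R)^-1)%:E.
have Imu : `[mu, l]%classic mu by rewrite /= in_itv /= lexx ltW.
have l0 : 0 <= l by lra.
have Lg : forall nu, ((spectral_radius (C nu))%:E <= limn_einf (u nu))%E.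
  move=> nu; apply: (@einf_ge _ _ _ 1%N) => t t1; rewrite /u lee_fin.
  exact: rad_le.
set F := [set (spectral_radius (C nu))%:E | nu in `[mu, l]].
set G := [set limn_einf (u nu) | nu in `[mu, l]].
have FG : (ereal_sup F <= ereal_sup G)%E.
  apply: ge_ereal_sup => _ [nu Inu <-]; apply: (le_trans (Lg nu)).
  by apply: ereal_sup_ubound; exists nu.
have Fmu : F (spectral_radius (C mu))%:E by exists mu.
case E: (ereal_sup F) => [s0| |].
- have hs : forall nu, `[mu, l]%classic nu -> spectral_radius (C nu) <= s0.
    move=> nu Inu; rewrite -lee_fin -E; apply: ereal_sup_ubound; by exists nu.
  have s00 : 0 <= s0 by apply: le_trans (rad_ge0 _ _ _) (hs mu Imu).
  have key : forall e, 0 < e -> exists T, forall t, (T <= t)%N ->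
      forall nu, `[mu, l]%classic nu -> (u nu t <= (s0%:E + e%:E))%E.
    move=> e e0; have e20 : 0 < e / 2 by rewrite divr_gt0.
    have [T HT] := @uniform _ p' mu l q r s0 (e / 2) mu0 l0 s00 e20 hs.
    exists T => t Tt nu Inu; rewrite /u lee_fin.
    by apply: (le_trans (HT t Tt nu Inu)); rewrite -addrA -splitr.
  have Gb : (ereal_sup G <= s0%:E)%E.
    apply: ge_ereal_sup => _ [nu Inu <-]; apply/lee_addgt0Pr => e e0.
    have [T HT] := key e e0; apply: (@einf_le _ _ _ T) => t Tt; exact: HT.
  have EG : ereal_sup G = s0%:E by apply/le_anti; rewrite Gb -E FG.
  split; first by rewrite EG.
  rewrite EG; apply/lee_addgt0Pr => e e0.
  have [T HT] := key e e0; apply: (@einf_le _ _ _ T) => t Tt.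
  by apply: ge_ereal_sup => _ [nu Inu <-]; exact: HT.
- have EG : ereal_sup G = +oo%E by apply/eqP; rewrite -leye_eq -E FG.
  by split; [rewrite EG | rewrite EG leey].
- have := ereal_sup_ubound Fmu; rewrite E //.
Qed.
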